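(* Let $\omega=e^{2\pi i/3}$, $\mathcal{E}=\mathbb{Z}[\omega]$, $\theta=\omega-\bar\omega$, and identify $\mathbb{C}^3$ with $\mathbb{R}^6$. Let $\Lambda_1,\dots,\Lambda_4\subset\mathbb{C}^3$ be the sets of $\mathcal{E}$-linear combinations of the rows of, respectively, $$\begin{bmatrix}\theta&0&0\\0&\theta&0\\0&0&\theta\end{bmatrix},\ \begin{bmatrix}1&1&1\\1&\omega&\bar\omega\\1&\bar\omega&\omega\end{bmatrix},\ \begin{bmatrix}1&1&\omega\\1&\omega&1\\1&\bar\omega&\bar\omega\end{bmatrix},\ \begin{bmatrix}1&1&\bar\omega\\1&\omega&\omega\\1&\bar\omega&1\end{bmatrix}$$ (each a copy of $\mathcal{E}^3\cong A_2^3$). Then $\Lambda_1\cap\Lambda_2\cap\Lambda_3\cap\Lambda_4$ is a lattice similar to $E_6^\ast$, the dual of the root lattice $E_6$.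
   Context: $\mathcal{E}$ is the ring of Eisenstein integers, which as a real 2-dimensional lattice is similar to the hexagonal lattice $A_2$. Two lattices are similar if one is mapped to the other by a linear map multiplying all inner products by a common positive constant. *)

(* Defs.v *)
From HB Require Import structures.
From mathcomp Require Import all_boot all_order all_algebra.
From mathcomp Require Import reals complex.
Set Implicit Arguments. Unset Strict Implicit. Unset Printing Implicit Defensive.
Import Order.TTheory GRing.Theory Num.Theory.
Local Open Scope ring_scope.
Local Open Scope complex_scope.

Section Defs.
Variable R : realType.

Definition omega : R[i] := (- (1/2)) +i* (Num.sqrt 3 / 2).
Definition omegab : R[i] := conjc omega.
Definition theta : R[i] := omega - omegab.

Definition eisenstein (z : R[i]) : Prop :=
  exists a b : int, z = a%:~R + b%:~R * omega.

Definition Espan (M : 'M[R[i]]_3) (v : 'rV[R[i]]_3) : Prop :=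
  exists a : 'rV[R[i]]_3, (forall j, eisenstein (a 0 j)) /\ v = a *m M.

Definition mx3 (l : seq (seq R[i])) : 'M[R[i]]_3 :=
  \matrix_(i < 3, j < 3) nth 0 (nth [::] l i) j.

Definition M1 := mx3 [:: [:: theta; 0; 0]; [:: 0; theta; 0]; [:: 0; 0; theta]].
Definition M2 := mx3 [:: [:: 1; 1; 1]; [:: 1; omega; omegab]; [:: 1; omegab; omega]].
Definition M3 := mx3 [:: [:: 1; 1; omega]; [:: 1; omega; 1]; [:: 1; omegab; omegab]].
Definition M4 := mx3 [:: [:: 1; 1; omegab]; [:: 1; omega; omega]; [:: 1; omegab; 1]].

Definition Lambda_int (v : 'rV[R[i]]_3) : Prop :=
  [/\ Espan M1 v, Espan M2 v, Espan M3 v & Espan M4 v].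

Definition cdot (v w : 'rV[R[i]]_3) : R :=
  \sum_(j < 3) (complex.Re (v 0 j) * complex.Re (w 0 j) + complex.Im (v 0 j) * complex.Im (w 0 j)).

Definition rdot (x y : 'rV[R]_8) : R := \sum_(j < 8) x 0 j * y 0 j.

Definition isZ (r : R) : Prop := exists z : int, r = z%:~R.

Definition E8 (x : 'rV[R]_8) : Prop :=
  ((forall j, isZ (x 0 j)) \/ (forall j, isZ (x 0 j - 1/2))) /\
  isZ ((\sum_(j < 8) x 0 j) / 2).

(* E6 = vectors of E8 orthogonal to the A2 spanned by e1-e2, e2-e3 *)
Definition E6span (x : 'rV[R]_8) : Prop := x 0 0 = x 0 1 /\ x 0 1 = x 0 2.
Definition E6 (x : 'rV[R]_8) : Prop := E8 x /\ E6span x.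

Definition E6dual (y : 'rV[R]_8) : Prop :=
  E6span y /\ forall x, E6 x -> isZ (rdot x y).

Definition lattice_similar (L : 'rV[R[i]]_3 -> Prop) (L' : 'rV[R]_8 -> Prop) : Prop :=
  exists (f : 'rV[R[i]]_3 -> 'rV[R]_8) (c : R),
    [/\ (forall v w, f (v + w) = f v + f w),
        (forall (r : R) v, f ((r%:C) *: v) = r *: f v),
        0 < c,
        (forall v w, rdot (f v) (f w) = c * cdot v w)
      & (forall y, L' y <-> exists v, L v /\ y = f v)].

End Defs.

(* Main.v *)
Require Import Defs.
From mathcomp Require Import all_boot all_order all_algebra.
From mathcomp Require Import reals complex.
From mathcomp Require Import ring lra.
Set Implicit Arguments. Unset Strict Implicit. Unset Printing Implicit Defensive.
Import Order.TTheory GRing.Theory Num.Theory.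
Local Open Scope ring_scope.
Local Open Scope complex_scope.

Section S.
Variable R : realType.
Local Notation C := R[i].
Local Notation s := (Num.sqrt (3 : R)).
Local Notation w := (omega R).
Local Notation Re := complex.Re.
Local Notation Im := complex.Im.

Lemma s2 : s * s = 3.
Proof. by rewrite -expr2 sqr_sqrtr. Qed.
Lemma s_neq0 : s != 0.
Proof. by rewrite sqrtr_eq0 -ltNge. Qed.

Lemma ReD (x y : C) : Re (x + y) = Re x + Re y. Proof. by case: x => a b; case: y => c d. Qed.
Lemma ImD (x y : C) : Im (x + y) = Im x + Im y. Proof. by case: x => a b; case: y => c d. Qed.
Lemma ReM (x y : C) : Re (x * y) = Re x * Re y - Im x * Im y. Proof. by case: x => a b; case: y => c d. Qed.
Lemma ImM (x y : C) : Im (x * y) = Re x * Im y + Im x * Re y. Proof. by case: x => a b; case: y => c d /=; ring. Qed.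
Lemma intC (p : int) : (p%:~R : C) = (p%:~R : R)%:C.
Proof. by rewrite rmorph_int. Qed.

Definition ex (z : C) : R := Re z + Im z / s.
Definition ey (z : C) : R := 2 * (Im z / s).
Definition EE (p q : int) : C := p%:~R + q%:~R * w.

Lemma ex_EE p q : ex (EE p q) = p%:~R.
Proof.
rewrite /ex /EE !ReD !ImD !ReM !ImM !intC /= /omega /=.
have := s_neq0; move=> h; field; exact: h. Qed.
Lemma ReN (x : C) : Re (- x) = - Re x. Proof. by case: x. Qed.
Lemma ImN (x : C) : Im (- x) = - Im x. Proof. by case: x. Qed.
Lemma Re1 : Re (1 : C) = 1. Proof. by []. Qed.
Lemma Im1 : Im (1 : C) = 0. Proof. by []. Qed.
Lemma ceq (x y : C) : Re x = Re y -> Im x = Im y -> x = y.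
Proof. by case: x => a b; case: y => c d /= -> ->. Qed.

Lemma ey_EE p q : ey (EE p q) = q%:~R.
Proof.
rewrite /ey /EE !ImD !ImM !intC /= /omega /=.
have := s_neq0; move=> h; field; exact: h. Qed.

Lemma ww : w * w = -1 - w.
Proof.
apply: ceq; rewrite ?ReM ?ImM ?ReD ?ImD ?ReN ?ImN /= /omega /=.
  have := s2; lra.
lra.
Qed.

Lemma EE_mul p q p' q' : EE p q * EE p' q' = EE (p * p' - q * q') (p * q' + q * p' - q * q').
Proof.
rewrite /EE.
have -> : (p%:~R + q%:~R * w) * (p'%:~R + q'%:~R * w) =
  (p%:~R * p'%:~R + (p%:~R * q'%:~R + q%:~R * p'%:~R) * w + q%:~R * q'%:~R * (w * w) : C) by ring.
rewrite ww; ring.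
Qed.
Lemma EE_add p q p' q' : EE p q + EE p' q' = EE (p + p') (q + q').
Proof. rewrite /EE; ring. Qed.
Lemma EE_w : w = EE 0 1. Proof. rewrite /EE; ring. Qed.
Lemma EE_1 : 1 = EE 1 0. Proof. rewrite /EE; ring. Qed.
Lemma EE_0 : 0 = EE 0 0. Proof. rewrite /EE; ring. Qed.
Lemma EE_wb : omegab R = EE (-1) (-1).
Proof.
rewrite /EE; apply: ceq; rewrite ?ReM ?ImM ?ReD ?ImD ?ReN ?ImN ?intC /= /omega /=; lra.
Qed.
Lemma EE_th : theta R = EE 1 2.
Proof. rewrite /theta EE_wb EE_w /EE. ring. Qed.
Lemma cterm (z z' : C) : Re z * Re z' + Im z * Im z' =
  ex z * ex z' - (ex z * ey z' + ey z * ex z') / 2 + ey z * ey z'.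
Proof.
rewrite /ex /ey.
have hb : forall b d : R, b * d = (b / s) * (d / s) * 3.
  have gen : forall t : R, t != 0 -> t * t = 3 -> forall b d : R, b * d = b / t * (d / t) * 3.
    by move=> t ht htt b d; rewrite -htt; field.
  exact: (gen _ s_neq0 s2).
rewrite (hb (Im z)).
move: (Im z / s) (Im z' / s) => u v.
by field.
Qed.

Lemma exD (x y : C) : ex (x + y) = ex x + ex y.
Proof. rewrite /ex ReD ImD; ring. Qed.
Lemma eyD (x y : C) : ey (x + y) = ey x + ey y.
Proof. rewrite /ey ImD; ring. Qed.
Lemma exZ (r : R) (x : C) : ex (r%:C * x) = r * ex x.
Proof. rewrite /ex ReM ImM /=; ring. Qed.
Lemma eyZ (r : R) (x : C) : ey (r%:C * x) = r * ey x.
Proof. rewrite /ey ImM /=; ring. Qed.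
Definition i0 : 'I_3 := @Ordinal 3 0 isT.
Definition i1 : 'I_3 := @Ordinal 3 1 isT.
Definition i2 : 'I_3 := @Ordinal 3 2 isT.

Lemma sum3 (V : zmodType) (F : 'I_3 -> V) : \sum_(j < 3) F j = F i0 + F i1 + F i2.
Proof. rewrite !big_ord_recr big_ord0 /= add0r; congr (F _ + F _ + F _); exact: val_inj. Qed.

Lemma sum8 (F : 'I_8 -> R) : \sum_(j < 8) F j =
  F (@Ordinal 8 0 isT) + F (@Ordinal 8 1 isT) + F (@Ordinal 8 2 isT) + F (@Ordinal 8 3 isT) +
  F (@Ordinal 8 4 isT) + F (@Ordinal 8 5 isT) + F (@Ordinal 8 6 isT) + F (@Ordinal 8 7 isT).
Proof.
rewrite !big_ord_recr big_ord0 /= add0r.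
congr (F _ + F _ + F _ + F _ + F _ + F _ + F _ + F _); exact: val_inj.
Qed.

Definition fl (x0 y0 x1 y1 x2 y2 : R) : seq R :=
  [:: -(x0+y2)/6; -(x0+y2)/6; -(x0+y2)/6; -x0/6 - y1/3 + y2/6;
      -x0/6 - x1/3 + y1/3 + y2/6; -x0/6 + x1/3 + y2/6;
      x0/6 - y0/3 - x2/3 + y2/6; x0/6 - y0/3 + x2/3 - y2/6].

Definition Fv (v : 'rV[C]_3) : 'rV[R]_8 :=
  \row_(c < 8) nth 0 (fl (ex (v 0 i0)) (ey (v 0 i0)) (ex (v 0 i1)) (ey (v 0 i1))
                        (ex (v 0 i2)) (ey (v 0 i2))) c.

Lemma Fv_add v w : Fv (v + w) = Fv v + Fv w.
Proof.
apply/rowP => c; rewrite !mxE !exD !eyD.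
case: c => [[|[|[|[|[|[|[|[|c]]]]]]]] hc] //=; by field.
Qed.

Lemma Fv_scale (r : R) v : Fv (r%:C *: v) = r *: Fv v.
Proof.
apply/rowP => c; rewrite !mxE !exZ !eyZ.
case: c => [[|[|[|[|[|[|[|[|c]]]]]]]] hc] //=; by field.
Qed.

Lemma Fv_dot v w : rdot (Fv v) (Fv w) = 2/9 * cdot v w.
Proof.
rewrite /rdot /cdot sum8 sum3 !mxE /= !cterm.
by field.
Qed.
Lemma rep1 v : Espan (M1 R) v -> exists p0 q0 p1 q1 p2 q2 : int,
  ex (v 0 i0) = ((1) * p0 + (-2) * q0)%:~R /\
     ey (v 0 i0) = ((2) * p0 + (-1) * q0)%:~R /\
     ex (v 0 i1) = ((1) * p1 + (-2) * q1)%:~R /\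
     ey (v 0 i1) = ((2) * p1 + (-1) * q1)%:~R /\
     ex (v 0 i2) = ((1) * p2 + (-2) * q2)%:~R /\
     ey (v 0 i2) = ((2) * p2 + (-1) * q2)%:~R.
Proof.
case=> a [ha ->].
have [p0 [q0 e0]] := ha i0; have [p1 [q1 e1]] := ha i1; have [p2 [q2 e2]] := ha i2.
have e0' : a 0 i0 = EE p0 q0 := e0; have e1' : a 0 i1 = EE p1 q1 := e1; have e2' : a 0 i2 = EE p2 q2 := e2.
exists p0, q0, p1, q1, p2, q2.
rewrite !mxE !sum3 /M1 /mx3 !mxE /= e0' e1' e2' ?EE_wb ?EE_th ?EE_w ?EE_1 ?EE_0.
rewrite !EE_mul !EE_add !ex_EE !ey_EE.
by repeat split; lra.
Qed.

Lemma rep2 v : Espan (M2 R) v -> exists p0 q0 p1 q1 p2 q2 : int,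
  ex (v 0 i0) = ((1) * p0 + (1) * p1 + (1) * p2)%:~R /\
     ey (v 0 i0) = ((1) * q0 + (1) * q1 + (1) * q2)%:~R /\
     ex (v 0 i1) = ((1) * p0 + (-1) * q1 + (-1) * p2 + (1) * q2)%:~R /\
     ey (v 0 i1) = ((1) * q0 + (1) * p1 + (-1) * q1 + (-1) * p2)%:~R /\
     ex (v 0 i2) = ((1) * p0 + (-1) * p1 + (1) * q1 + (-1) * q2)%:~R /\
     ey (v 0 i2) = ((1) * q0 + (-1) * p1 + (1) * p2 + (-1) * q2)%:~R.
Proof.
case=> a [ha ->].
have [p0 [q0 e0]] := ha i0; have [p1 [q1 e1]] := ha i1; have [p2 [q2 e2]] := ha i2.
have e0' : a 0 i0 = EE p0 q0 := e0; have e1' : a 0 i1 = EE p1 q1 := e1; have e2' : a 0 i2 = EE p2 q2 := e2.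
exists p0, q0, p1, q1, p2, q2.
rewrite !mxE !sum3 /M2 /mx3 !mxE /= e0' e1' e2' ?EE_wb ?EE_th ?EE_w ?EE_1 ?EE_0.
rewrite !EE_mul !EE_add !ex_EE !ey_EE.
by repeat split; lra.
Qed.

Lemma rep3 v : Espan (M3 R) v -> exists p0 q0 p1 q1 p2 q2 : int,
  ex (v 0 i0) = ((1) * p0 + (1) * p1 + (1) * p2)%:~R /\
     ey (v 0 i0) = ((1) * q0 + (1) * q1 + (1) * q2)%:~R /\
     ex (v 0 i1) = ((1) * p0 + (-1) * q1 + (-1) * p2 + (1) * q2)%:~R /\
     ey (v 0 i1) = ((1) * q0 + (1) * p1 + (-1) * q1 + (-1) * p2)%:~R /\
     ex (v 0 i2) = ((-1) * q0 + (1) * p1 + (-1) * p2 + (1) * q2)%:~R /\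
     ey (v 0 i2) = ((1) * p0 + (-1) * q0 + (1) * q1 + (-1) * p2)%:~R.
Proof.
case=> a [ha ->].
have [p0 [q0 e0]] := ha i0; have [p1 [q1 e1]] := ha i1; have [p2 [q2 e2]] := ha i2.
have e0' : a 0 i0 = EE p0 q0 := e0; have e1' : a 0 i1 = EE p1 q1 := e1; have e2' : a 0 i2 = EE p2 q2 := e2.
exists p0, q0, p1, q1, p2, q2.
rewrite !mxE !sum3 /M3 /mx3 !mxE /= e0' e1' e2' ?EE_wb ?EE_th ?EE_w ?EE_1 ?EE_0.
rewrite !EE_mul !EE_add !ex_EE !ey_EE.
by repeat split; lra.
Qed.

Lemma rep4 v : Espan (M4 R) v -> exists p0 q0 p1 q1 p2 q2 : int,
  ex (v 0 i0) = ((1) * p0 + (1) * p1 + (1) * p2)%:~R /\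
     ey (v 0 i0) = ((1) * q0 + (1) * q1 + (1) * q2)%:~R /\
     ex (v 0 i1) = ((1) * p0 + (-1) * q1 + (-1) * p2 + (1) * q2)%:~R /\
     ey (v 0 i1) = ((1) * q0 + (1) * p1 + (-1) * q1 + (-1) * p2)%:~R /\
     ex (v 0 i2) = ((-1) * p0 + (1) * q0 + (-1) * q1 + (1) * p2)%:~R /\
     ey (v 0 i2) = ((-1) * p0 + (1) * p1 + (-1) * q1 + (1) * q2)%:~R.
Proof.
case=> a [ha ->].
have [p0 [q0 e0]] := ha i0; have [p1 [q1 e1]] := ha i1; have [p2 [q2 e2]] := ha i2.
have e0' : a 0 i0 = EE p0 q0 := e0; have e1' : a 0 i1 = EE p1 q1 := e1; have e2' : a 0 i2 = EE p2 q2 := e2.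
exists p0, q0, p1, q1, p2, q2.
rewrite !mxE !sum3 /M4 /mx3 !mxE /= e0' e1' e2' ?EE_wb ?EE_th ?EE_w ?EE_1 ?EE_0.
rewrite !EE_mul !EE_add !ex_EE !ey_EE.
by repeat split; lra.
Qed.
Lemma ord8P (P : 'I_8 -> Prop) : P (@Ordinal 8 0 isT) -> P (@Ordinal 8 1 isT) -> P (@Ordinal 8 2 isT) -> P (@Ordinal 8 3 isT) -> P (@Ordinal 8 4 isT) -> P (@Ordinal 8 5 isT) -> P (@Ordinal 8 6 isT) -> P (@Ordinal 8 7 isT) -> forall c, P c.
Proof.
move=> H0 H1 H2 H3 H4 H5 H6 H7 [[|[|[|[|[|[|[|[|c]]]]]]]] hc] //;
  by rewrite (bool_irrelevance hc isT).
Qed.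
Lemma o8_0 : (0 : 'I_8) = (@Ordinal 8 0 isT). Proof. by apply: val_inj. Qed.
Lemma o8_1 : (1 : 'I_8) = (@Ordinal 8 1 isT). Proof. by apply: val_inj. Qed.
Lemma o8_2 : (2 : 'I_8) = (@Ordinal 8 2 isT). Proof. by apply: val_inj. Qed.
Lemma EE_eq p q p' q' : p = p' -> q = q' -> EE p q = EE p' q'.
Proof. by move=> -> ->. Qed.

Lemma key_sub v : Lambda_int v -> exists z0 z1 z2 z3 z4 z5 : int,
  (-1) * ex (v 0 i0) + (1) * ey (v 0 i0) + (-2) * ey (v 0 i2) = z0%:~R /\
  (-2/3) * ex (v 0 i0) + (2/3) * ey (v 0 i0) + (1/3) * ey (v 0 i1) + (-5/3) * ey (v 0 i2) = z1%:~R /\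
  (-1/3) * ex (v 0 i0) + (1/3) * ey (v 0 i0) + (1/3) * ex (v 0 i1) + (-4/3) * ey (v 0 i2) = z2%:~R /\
  (-1) * ey (v 0 i2) = z3%:~R /\
  (1/3) * ex (v 0 i2) + (-2/3) * ey (v 0 i2) = z4%:~R /\
  (1/3) * ex (v 0 i0) + (-2/3) * ey (v 0 i0) + (1) * ey (v 0 i2) = z5%:~R.
Proof.
case=> h1 h2 h3 h4.
have [a0 [b0 [a1 [b1 [a2 [b2 [A1 [A2 [A3 [A4 [A5 A6]]]]]]]]]]] := rep1 h1.
have [c0 [d0 [c1 [d1 [c2 [d2 [C1 [C2 [C3 [C4 [C5 C6]]]]]]]]]]] := rep3 h3.
have [e0 [f0 [e1 [f1 [e2 [f2 [E1 [E2 [E3 [E4 [E5 E6]]]]]]]]]]] := rep4 h4.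
exists ((1) * a0 + (1) * b0 + (-4) * a2 + (2) * b2), ((-1) * a0 + (2) * b0 + (2) * a1 + (-1) * b1 + (-4) * a2 + (2) * b2 + (1) * f1 + (1) * e2 + (1) * f2), ((-1) * a0 + (2) * b0 + (2) * a1 + (-1) * b1 + (-3) * a2 + (3) * b2 + (1) * d2 + (2) * e2), ((-2) * a2 + (1) * b2), ((-2) * a0 + (1) * b0 + (1) * a1 + (1) * b1 + (-2) * a2 + (1) * b2 + (1) * d2 + (2) * f2), ((-4) * a0 + (2) * b0 + (2) * a1 + (-1) * b1 + (2) * a2 + (-1) * b2 + (1) * d2 + (2) * f1 + (1) * e2 + (1) * f2).
by repeat split; lra.
Qed.

Lemma key_E6 (x : 'rV[R]_8) : E6 x -> exists t0 t1 t2 t3 t4 t5 : int,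
  (x 0 (@Ordinal 8 0 isT) + x 0 (@Ordinal 8 1 isT) + x 0 (@Ordinal 8 2 isT)) / 3 + x 0 (@Ordinal 8 3 isT) = t0%:~R /\
  x 0 (@Ordinal 8 4 isT) - x 0 (@Ordinal 8 3 isT) = t1%:~R /\
  x 0 (@Ordinal 8 5 isT) - x 0 (@Ordinal 8 4 isT) = t2%:~R /\
  x 0 (@Ordinal 8 6 isT) - x 0 (@Ordinal 8 5 isT) = t3%:~R /\
  x 0 (@Ordinal 8 7 isT) - x 0 (@Ordinal 8 6 isT) = t4%:~R /\
  (x 0 (@Ordinal 8 0 isT) + x 0 (@Ordinal 8 1 isT) + x 0 (@Ordinal 8 2 isT) + x 0 (@Ordinal 8 3 isT) + x 0 (@Ordinal 8 4 isT) + x 0 (@Ordinal 8 5 isT) + x 0 (@Ordinal 8 6 isT) + x 0 (@Ordinal 8 7 isT)) / 2 = t5%:~R.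
Proof.
case=> [[hZ [s hs]] [h01 h12]].
rewrite ?o8_2 ?o8_0 ?o8_1 in h01 h12.
rewrite sum8 /= in hs.
case: hZ => h.
have [u0 e0] := h (@Ordinal 8 0 isT).
have [u1 e1] := h (@Ordinal 8 1 isT).
have [u2 e2] := h (@Ordinal 8 2 isT).
have [u3 e3] := h (@Ordinal 8 3 isT).
have [u4 e4] := h (@Ordinal 8 4 isT).
have [u5 e5] := h (@Ordinal 8 5 isT).
have [u6 e6] := h (@Ordinal 8 6 isT).
have [u7 e7] := h (@Ordinal 8 7 isT).
exists (u0 + u3), (u4 - u3), (u5 - u4), (u6 - u5), (u7 - u6), s.
by repeat split; lra.
have [u0 e0] := h (@Ordinal 8 0 isT).
have [u1 e1] := h (@Ordinal 8 1 isT).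
have [u2 e2] := h (@Ordinal 8 2 isT).
have [u3 e3] := h (@Ordinal 8 3 isT).
have [u4 e4] := h (@Ordinal 8 4 isT).
have [u5 e5] := h (@Ordinal 8 5 isT).
have [u6 e6] := h (@Ordinal 8 6 isT).
have [u7 e7] := h (@Ordinal 8 7 isT).
exists (u0 + u3 + 1), (u4 - u3), (u5 - u4), (u6 - u5), (u7 - u6), s.
by repeat split; lra.
Qed.

Definition erow0 : 'rV[R]_8 := \row_(c < 8) nth 0 [:: (5/2 : R); (5/2 : R); (5/2 : R); (-3/2 : R); (-3/2 : R); (-3/2 : R); (-3/2 : R); (-3/2 : R)] c.
Lemma E6_e0 : E6 erow0.
Proof.
split; [split|].
- right; apply: ord8P; rewrite mxE /=;
  [exists (2) | exists (2) | exists (2) | exists (-2) | exists (-2) | exists (-2) | exists (-2) | exists (-2)]; lra.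
- exists (0); rewrite sum8 !mxE /=; lra.
- rewrite /E6span o8_2 o8_0 o8_1 !mxE /=; lra.
Qed.

Definition erow1 : 'rV[R]_8 := \row_(c < 8) nth 0 [:: (2 : R); (2 : R); (2 : R); (-2 : R); (-1 : R); (-1 : R); (-1 : R); (-1 : R)] c.
Lemma E6_e1 : E6 erow1.
Proof.
split; [split|].
- left; apply: ord8P; rewrite mxE /=;
  [exists (2) | exists (2) | exists (2) | exists (-2) | exists (-1) | exists (-1) | exists (-1) | exists (-1)]; lra.
- exists (0); rewrite sum8 !mxE /=; lra.
- rewrite /E6span o8_2 o8_0 o8_1 !mxE /=; lra.
Qed.

Definition erow2 : 'rV[R]_8 := \row_(c < 8) nth 0 [:: (3/2 : R); (3/2 : R); (3/2 : R); (-3/2 : R); (-3/2 : R); (-1/2 : R); (-1/2 : R); (-1/2 : R)] c.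
Lemma E6_e2 : E6 erow2.
Proof.
split; [split|].
- right; apply: ord8P; rewrite mxE /=;
  [exists (1) | exists (1) | exists (1) | exists (-2) | exists (-2) | exists (-1) | exists (-1) | exists (-1)]; lra.
- exists (0); rewrite sum8 !mxE /=; lra.
- rewrite /E6span o8_2 o8_0 o8_1 !mxE /=; lra.
Qed.

Definition erow3 : 'rV[R]_8 := \row_(c < 8) nth 0 [:: (1 : R); (1 : R); (1 : R); (-1 : R); (-1 : R); (-1 : R); (0 : R); (0 : R)] c.
Lemma E6_e3 : E6 erow3.
Proof.
split; [split|].
- left; apply: ord8P; rewrite mxE /=;
  [exists (1) | exists (1) | exists (1) | exists (-1) | exists (-1) | exists (-1) | exists (0) | exists (0)]; lra.
- exists (0); rewrite sum8 !mxE /=; lra.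
- rewrite /E6span o8_2 o8_0 o8_1 !mxE /=; lra.
Qed.

Definition erow4 : 'rV[R]_8 := \row_(c < 8) nth 0 [:: (1/2 : R); (1/2 : R); (1/2 : R); (-1/2 : R); (-1/2 : R); (-1/2 : R); (-1/2 : R); (1/2 : R)] c.
Lemma E6_e4 : E6 erow4.
Proof.
split; [split|].
- right; apply: ord8P; rewrite mxE /=;
  [exists (0) | exists (0) | exists (0) | exists (-1) | exists (-1) | exists (-1) | exists (-1) | exists (0)]; lra.
- exists (0); rewrite sum8 !mxE /=; lra.
- rewrite /E6span o8_2 o8_0 o8_1 !mxE /=; lra.
Qed.

Definition erow5 : 'rV[R]_8 := \row_(c < 8) nth 0 [:: (-1 : R); (-1 : R); (-1 : R); (1 : R); (1 : R); (1 : R); (1 : R); (1 : R)] c.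
Lemma E6_e5 : E6 erow5.
Proof.
split; [split|].
- left; apply: ord8P; rewrite mxE /=;
  [exists (-1) | exists (-1) | exists (-1) | exists (1) | exists (1) | exists (1) | exists (1) | exists (1)]; lra.
- exists (1); rewrite sum8 !mxE /=; lra.
- rewrite /E6span o8_2 o8_0 o8_1 !mxE /=; lra.
Qed.
Lemma main : lattice_similar (@Lambda_int R) (@E6dual R).
Proof.
exists Fv, (2/9); split.
- exact: Fv_add.
- exact: Fv_scale.
- lra.
- exact: Fv_dot.
move=> y; split.
- case=> [[hy01 hy12] hy].
  rewrite ?o8_2 ?o8_0 ?o8_1 in hy01 hy12.
  have [m0 hm0] := hy _ E6_e0.
  rewrite /rdot sum8 !mxE /= in hm0.
  have [m1 hm1] := hy _ E6_e1.
  rewrite /rdot sum8 !mxE /= in hm1.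
  have [m2 hm2] := hy _ E6_e2.
  rewrite /rdot sum8 !mxE /= in hm2.
  have [m3 hm3] := hy _ E6_e3.
  rewrite /rdot sum8 !mxE /= in hm3.
  have [m4 hm4] := hy _ E6_e4.
  rewrite /rdot sum8 !mxE /= in hm4.
  have [m5 hm5] := hy _ E6_e5.
  rewrite /rdot sum8 !mxE /= in hm5.
    exists (\row_(j < 3) nth 0 [:: EE ((-2) * m0 + (1) * m3 + (-3) * m5) ((-1) * m0 + (-1) * m3 + (-3) * m5); EE ((-1) * m0 + (3) * m2 + (-2) * m3) ((-2) * m0 + (3) * m1 + (-1) * m3); EE ((-2) * m3 + (3) * m4) ((-1) * m3)] j).
  split; last first.
    apply/rowP; apply: ord8P; rewrite !mxE /fl /= !ex_EE !ey_EE; lra.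
  split.
  exists (\row_(r < 3) nth 0 [:: EE ((-1) * m3 + (-1) * m5) ((1) * m0 + (-1) * m3 + (1) * m5); EE ((-1) * m0 + (2) * m1 + (-1) * m2) ((1) * m1 + (-2) * m2 + (1) * m3); EE ((-1) * m4) ((1) * m3 + (-2) * m4)] r); split.
    move=> r; rewrite mxE; case: r => [[|[|[|r]]] hr] //=; by do 2 eexists.
    apply/rowP => j; rewrite !mxE sum3 /M1 /mx3 !mxE /=.
    case: j => [[|[|[|j]]] hj] //=; rewrite ?EE_wb ?EE_th ?EE_w ?EE_1 ?EE_0 !EE_mul !EE_add; apply: EE_eq; ring.
  exists (\row_(r < 3) nth 0 [:: EE ((-1) * m0 + (1) * m2 + (-1) * m3 + (1) * m4 + (-1) * m5) ((-1) * m0 + (1) * m1 + (-1) * m3 + (-1) * m5); EE ((-1) * m0 + (1) * m1 + (-1) * m2 + (1) * m3 + (-1) * m5) ((-1) * m2 + (1) * m4 + (-1) * m5); EE ((-1) * m1 + (1) * m3 + (-1) * m4 + (-1) * m5) ((-1) * m1 + (1) * m2 + (-1) * m4 + (-1) * m5)] r); split.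
    move=> r; rewrite mxE; case: r => [[|[|[|r]]] hr] //=; by do 2 eexists.
    apply/rowP => j; rewrite !mxE sum3 /M2 /mx3 !mxE /=.
    case: j => [[|[|[|j]]] hj] //=; rewrite ?EE_wb ?EE_th ?EE_w ?EE_1 ?EE_0 !EE_mul !EE_add; apply: EE_eq; ring.
  exists (\row_(r < 3) nth 0 [:: EE ((-1) * m0 + (1) * m2 + (-1) * m4 + (-1) * m5) ((-1) * m0 + (1) * m1 + (-1) * m4 + (-1) * m5); EE ((-1) * m0 + (1) * m1 + (-1) * m2 + (1) * m4 + (-1) * m5) ((-1) * m2 + (-1) * m5); EE ((-1) * m1 + (1) * m3 + (-1) * m5) ((-1) * m1 + (1) * m2 + (-1) * m3 + (1) * m4 + (-1) * m5)] r); split.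
    move=> r; rewrite mxE; case: r => [[|[|[|r]]] hr] //=; by do 2 eexists.
    apply/rowP => j; rewrite !mxE sum3 /M3 /mx3 !mxE /=.
    case: j => [[|[|[|j]]] hj] //=; rewrite ?EE_wb ?EE_th ?EE_w ?EE_1 ?EE_0 !EE_mul !EE_add; apply: EE_eq; ring.
  exists (\row_(r < 3) nth 0 [:: EE ((-1) * m0 + (1) * m2 + (-1) * m5) ((-1) * m0 + (1) * m1 + (-1) * m3 + (1) * m4 + (-1) * m5); EE ((-1) * m0 + (1) * m1 + (-1) * m2 + (1) * m3 + (-1) * m4 + (-1) * m5) ((-1) * m2 + (1) * m3 + (-1) * m4 + (-1) * m5); EE ((-1) * m1 + (1) * m4 + (-1) * m5) ((-1) * m1 + (1) * m2 + (-1) * m3 + (-1) * m5)] r); split.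
    move=> r; rewrite mxE; case: r => [[|[|[|r]]] hr] //=; by do 2 eexists.
    apply/rowP => j; rewrite !mxE sum3 /M4 /mx3 !mxE /=.
    case: j => [[|[|[|j]]] hj] //=; rewrite ?EE_wb ?EE_th ?EE_w ?EE_1 ?EE_0 !EE_mul !EE_add; apply: EE_eq; ring.
- case=> v [hv ->]; split.
    by rewrite /E6span ?o8_2 ?o8_0 ?o8_1 !mxE /=.
  move=> x hx.
  have [z0 [z1 [z2 [z3 [z4 [z5 [hz0 [hz1 [hz2 [hz3 [hz4 hz5]]]]]]]]]]] := key_sub hv.
  have [t0 [t1 [t2 [t3 [t4 [t5 [ht0 [ht1 [ht2 [ht3 [ht4 ht5]]]]]]]]]]] := key_E6 hx.
  exists (z0 * t0 + z1 * t1 + z2 * t2 + z3 * t3 + z4 * t4 + z5 * t5).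
  rewrite !intrD !intrM -hz0 -hz1 -hz2 -hz3 -hz4 -hz5 -ht0 -ht1 -ht2 -ht3 -ht4 -ht5.
  rewrite /rdot sum8 !mxE /fl /=.
  by field.
Qed.
End S.

Theorem mainTheorem6 (R : realType) : lattice_similar (@Lambda_int R) (@E6dual R).
Proof. exact: main. Qed.
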